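(* Let $X,X_1,X_2,\dots$ be i.i.d. nonnegative random variables with $\mathbb{E}[X]>0$ and $\mathbb{E}[X^2]<\infty$, and let $N_X(x)=\max\{k\ge0:\sum_{n=1}^kX_n\le x\}$ for $x\in\mathbb{R}$. Then for every $\delta>0$ there exist finite constants $\widetilde C=\widetilde C(\delta)>0$ and $\tilde c=\tilde c(\delta)>0$ such that $$\mathbb{P}\Big(N_X(x)-\frac{x}{\mathbb{E}[X]}>u\Big)\le\widetilde C\exp\{-\tilde c\,u^2/x\}\qquad\text{for all }x\ge0,\ 0\le u\le\delta x.$$ *)

(* Defs.v *)
From HB Require Import structures.
From mathcomp Require Import all_boot all_order all_algebra.
From mathcomp Require Import all_classical all_reals all_analysis.
Set Implicit Arguments. Unset Strict Implicit. Unset Printing Implicit Defensive.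
Import Order.TTheory GRing.Theory Num.Theory.
Local Open Scope classical_set_scope.
Local Open Scope ring_scope.

Definition mutually_independent d (T : measurableType d) (R : realType)
  (P : probability T R) (X : nat -> {RV P >-> R}) : Prop :=
  forall (s : seq nat) (B : nat -> set R),
    uniq s -> (forall i, measurable (B i)) ->
    P (\bigcap_(i in [set` s]) (X i @^-1` B i)) =
      (\prod_(i <- s) P (X i @^-1` B i))%E.

Definition identically_distributed d (T : measurableType d) (R : realType)
  (P : probability T R) (X : nat -> {RV P >-> R}) : Prop :=
  forall n, distribution P (X n) = distribution P (X 0%N).

(* Partial sum S_k(w) = X_1(w)+...+X_k(w), where the paper's X_n is X (n-1). *)
Definition partial_sum d (T : measurableType d) (R : realType)
  (P : probability T R) (X : nat -> {RV P >-> R}) (k : nat) (w : T) : R :=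
  \sum_(n < k) X n w.

(* Renewal counting variable N_X(x)(w) = max{k >= 0 : S_k(w) <= x}, taken as a
   supremum in the extended reals (+oo if unbounded, -oo if empty). *)
Definition renewal_count d (T : measurableType d) (R : realType)
  (P : probability T R) (X : nat -> {RV P >-> R}) (x : R) (w : T) : \bar R :=
  ereal_sup [set (k%:R)%:E | k in [set k : nat | partial_sum X k w <= x]].

(* Main.v *)
Require Import Defs.
From HB Require Import structures.
From mathcomp Require Import all_boot all_order all_algebra.
From mathcomp Require Import all_classical all_reals all_analysis.
From mathcomp Require Import ring lra zify measurable_realfun.
Import Order.TTheory GRing.Theory Num.Theory.
Local Open Scope classical_set_scope.
Local Open Scope ring_scope.
Lemma expRN_le (R : realType) (z : R) : 0 <= z -> expR (- z) <= 1 - z + z ^+ 2.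
Proof.
move=> z0; rewrite expRN.
have h1 : 1 + z <= expR z by apply: expR_ge1Dx.
have p1 : 0 < 1 + z by lra.
apply: (@le_trans _ _ (1 + z)^-1).
  by rewrite lef_pV2 // ?posrE // expR_gt0.
have h : (1 + z)^-1 * (1 + z) = 1 by rewrite mulVf // gt_eqF.
have i0 : 0 <= (1 + z)^-1 by rewrite invr_ge0 ltW.
have z3 : 0 <= (1 + z)^-1 * z ^+ 3 by rewrite mulr_ge0 // exprn_ge0.
nra.
Qed.

Lemma sum_le_nat (M n : nat) : \sum_(j < M) ((j <= n)%N : nat) = minn M n.+1.
Proof.
elim: M => [|M IH]; first by rewrite big_ord0.
rewrite big_ord_recr /= IH.
case: (leqP M n) => h /=; lia.
Qed.

Lemma count_bounds (R : realType) (M : nat) (y : R) : (0 < M)%N -> 0 <= y -> y <= 1 ->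
  let S := M%:R^-1 * \sum_(j < M) (((j%:R / M%:R <= y)%R : bool)%:R : R) in
  y <= S /\ S <= y + M%:R^-1.
Proof.
move=> M0 y0 y1 S.
have Mp : 0 < (M%:R : R) by rewrite ltr0n.
set n := Num.truncn (y * M%:R).
have yM0 : 0 <= y * M%:R by rewrite mulr_ge0 // ltW.
have Hn := truncn_itv yM0.
have E : \sum_(j < M) (((j%:R / M%:R <= y)%R : bool)%:R : R) = (minn M n.+1)%:R.
  rewrite -sum_le_nat natr_sum; apply: eq_bigr => j _.
  by rewrite ler_pdivrMr // -truncn_ge_nat.
rewrite /S E; move/andP: Hn => [Hn1 Hn2].
rewrite -/n -natr1 in Hn1 Hn2.
have Mi : M%:R^-1 * (M%:R : R) = 1 by rewrite mulVf // gt_eqF.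
split.
  case: (leqP M n.+1) => h.
    by rewrite Mi.
  rewrite -(ler_pM2l Mp) mulrA mulfV ?gt_eqF // mul1r -natr1 -/n; lra.
rewrite -(ler_pM2l Mp) mulrA mulfV ?gt_eqF // mul1r mulrDr mulfV ?gt_eqF //.
have : ((minn M n.+1)%:R : R) <= n.+1%:R by rewrite ler_nat geq_minr.
rewrite -natr1; lra.
Qed.

Lemma indic_bool (T : Type) (R : realType) (b : T -> bool) x :
  \1_[set z | b z] x = (b x)%:R :> R.
Proof.
rewrite indicE; case: (boolP (b x)) => h; first by rewrite mem_set.
by rewrite memNset //=; apply/negP.
Qed.

Lemma indic_pre (T U : Type) (R : realType) (g : T -> U) (b : U -> bool) w :
  \1_(g @^-1` [set z | b z]) w = (b (g w))%:R :> R.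
Proof.
rewrite indicE; case: (boolP (b (g w))) => h; first by rewrite mem_set.
by rewrite memNset //=; apply/negP.
Qed.

Lemma chernoff d (T : measurableType d) (R : realType) (P : probability T R)
  (X : nat -> {RV P >-> R}) (mu s2 lam x : R) (k : nat) :
  mutually_independent X -> identically_distributed X ->
  (forall n w, 0 <= X n w) ->
  ('E_P[X 0%N] = mu%:E)%E -> ('E_P[(fun w => (X 0%N w ^+ 2)%R)] = s2%:E)%E -> 0 < lam ->
  (P [set w | (partial_sum X k w <= x)%R] <=
    (expR (lam * x) * expR (- (lam * mu) + lam ^+ 2 * (s2 + 1)) ^+ k)%:E)%E.
Proof.
move=> indep ident X0 Emu Es2 lam0.
have EX : (\int[P]_w (X 0%N w)%:E = mu%:E)%E by rewrite -Emu unlock.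
have EX2 : (\int[P]_w ((X 0%N w) ^+ 2)%:E = s2%:E)%E by rewrite -Es2 unlock.
pose M := (Num.truncn (lam ^- 2)).+1.
have M0 : (0 < M)%N by [].
pose eta : R := M%:R^-1.
have eta0 : 0 <= eta by rewrite invr_ge0.
have eta_le : eta <= lam ^+ 2.
  have l2 : 0 <= lam ^- 2 by rewrite invr_ge0 exprn_ge0 // ltW.
  have /andP[_ h] := truncn_itv l2.
  rewrite /eta -[lam ^+ 2]invrK lef_pV2 ?posrE ?ltr0n ?invr_gt0 ?exprn_gt0 //.
  exact: ltW.
pose f (y : R) := expR (- (lam * y)).
have mf : measurable_fun setT f.
  apply: measurableT_comp; first exact: measurable_expR.
  apply: measurableT_comp; first exact: measurable_funN.
  exact: mulrl_measurable.
pose B (j : nat) : set R := [set y | (j%:R / M%:R <= f y)%R].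
have mB j : measurable (B j).
  rewrite /B -[X in measurable X]setTI.
  by apply: (measurable_fun_le (f := cst (j%:R / M%:R))) => //; exact: measurable_cst.
have mpre n A : measurable A -> measurable (X n @^-1` A).
  by move=> mA; exact: measurable_funPTI.
pose q (j : 'I_M) : R := fine (P (X 0%N @^-1` B j)).
have hq (j : 'I_M) : P (X 0%N @^-1` B j) = (q j)%:E.
  by rewrite fineK //; apply: fin_num_measure; exact: mpre.
have q0 (j : 'I_M) : 0 <= q j by apply: fine_ge0; exact: measure_ge0.
have stepA : eta * \sum_(j < M) q j <= 1 - lam * mu + lam ^+ 2 * (s2 + 1).
  pose G (w : T) : R := eta * \sum_(j < M) \1_(X 0%N @^-1` B j) w.
  have mG : measurable_fun setT G.
    apply: measurable_funM; first exact: measurable_cst.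
    by apply: measurable_sum => j; apply: measurable_indic; exact: mpre.
  have G0 w : 0 <= G w.
    rewrite /G; apply: mulr_ge0 => //; apply: sumr_ge0 => j _.
    by rewrite indicE ler0n.
  have intG : (\int[P]_w (G w)%:E = (eta * \sum_(j < M) q j)%:E)%E.
    have mI (j : 'I_M) : measurable_fun setT (fun w => (\1_(X 0%N @^-1` B j) w : R)%:E).
      by apply/measurable_EFinP; apply: measurable_indic; exact: mpre.
    have I0 (j : 'I_M) w : (0 <= (\1_(X 0%N @^-1` B j) w : R)%:E)%E.
      by rewrite lee_fin indicE ler0n.
    rewrite (eq_integral (fun w => (eta%:E * \sum_(j < M) (\1_(X 0%N @^-1` B j) w : R)%:E)%E)); last first.
      by move=> w _; rewrite /G EFinM sumEFin.
    rewrite ge0_integralZl //; first last.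
    - by move=> w _; apply: sume_ge0 => j _; exact: I0.
    - exact: emeasurable_sum.
    rewrite (@ge0_integral_sum _ _ _ P _ measurableT _
      (fun (j : 'I_M) w => (\1_(X 0%N @^-1` B j) w : R)%:E) mI (fun j w _ => I0 j w)).
    under eq_bigr => j _ do rewrite (integral_indic _ measurableT (mpre _ _ (mB j))) setIT.
    rewrite (eq_bigr (fun j => (q j)%:E)); last first.
      by move=> j _; rewrite /q fineK //; apply: fin_num_measure; exact: mpre.
    by rewrite sumEFin -EFinM.
  have Gle w : G w + lam * X 0%N w <= (1 + lam ^+ 2) + lam ^+ 2 * X 0%N w ^+ 2.
    have y0 : 0 <= f (X 0%N w) by exact: expR_ge0.
    have y1 : f (X 0%N w) <= 1.
      by rewrite /f expR_le1 oppr_le0 mulr_ge0 // ltW.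
    have [_ h] := @count_bounds R M _ M0 y0 y1.
    have eG : G w = M%:R^-1 * \sum_(j < M) (((j%:R / M%:R <= f (X 0%N w))%R : bool)%:R : R).
      rewrite /G; congr (_ * _); apply: eq_bigr => j _.
      exact: (@indic_pre _ _ R (X 0%N) (fun y => (j%:R / M%:R <= f y)%R) w).
    have he := @expRN_le R _ (mulr_ge0 (ltW lam0) (X0 0%N w)).
    rewrite exprMn in he.
    rewrite eG; rewrite -/eta in h *; rewrite /f in h he.
    lra.
  have mX : measurable_fun setT (X 0%N) by exact: measurable_funP.
  have eqL : (\int[P]_w ((G w + lam * X 0%N w)%:E) = (eta * \sum_(j < M) q j + lam * mu)%:E)%E.
    rewrite (eq_integral (fun w => (G w)%:E + (lam%:E * (X 0%N w)%:E))%E); last first.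
      by move=> w _; rewrite EFinD EFinM.
    rewrite ge0_integralD //; last 4 first.
    - by move=> w _; rewrite lee_fin.
    - exact/measurable_EFinP.
    - by move=> w _; rewrite -EFinM lee_fin mulr_ge0 // ltW.
    - apply: emeasurable_funM; first exact: measurable_cst.
      exact/measurable_EFinP.
    rewrite ge0_integralZl //; last 3 first.
    - exact/measurable_EFinP.
    - by move=> w _; rewrite lee_fin.
    - by rewrite lee_fin ltW.
    by rewrite intG EX -EFinM -EFinD.
  have eqR : (\int[P]_w (((1 + lam ^+ 2) + lam ^+ 2 * X 0%N w ^+ 2)%:E) =
      (1 + lam ^+ 2 + lam ^+ 2 * s2)%:E)%E.
    rewrite (eq_integral (fun w => (1 + lam ^+ 2)%:E + (lam ^+ 2)%:E * (X 0%N w ^+ 2)%:E)%E); last first.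
      by move=> w _; rewrite EFinD EFinM.
    have h1 : forall w, [set: T] w -> (0 <= (1 + lam ^+ 2)%:E)%E.
      by move=> w _; rewrite lee_fin addr_ge0 // sqr_ge0.
    have h2 : forall w, [set: T] w -> (0 <= (lam ^+ 2)%:E * (X 0%N w ^+ 2)%:E)%E.
      by move=> w _; rewrite -EFinM lee_fin mulr_ge0 // sqr_ge0.
    have m2 : measurable_fun setT (fun w => ((lam ^+ 2)%:E * (X 0%N w ^+ 2)%:E)%E).
      apply: emeasurable_funM; first exact: measurable_cst.
      by apply/measurable_EFinP; exact: measurable_funX.
    rewrite (ge0_integralD P measurableT h1 (measurable_cst _) h2 m2).
    rewrite ge0_integralZl //; last 3 first.
    - by apply/measurable_EFinP; exact: measurable_funX.
    - by move=> w _; rewrite lee_fin sqr_ge0.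
    - by rewrite lee_fin sqr_ge0.
    rewrite integral_cst //.
    set PT := (X in (_ * X + _)%E); have -> : PT = 1%E by exact: probability_setT.
    by rewrite mule1 EX2 -EFinM -EFinD.
  have Hint : (\int[P]_w ((G w + lam * X 0%N w)%:E) <=
      \int[P]_w (((1 + lam ^+ 2) + lam ^+ 2 * X 0%N w ^+ 2)%:E))%E.
    apply: ge0_le_integral => //.
    - by move=> w _; rewrite lee_fin addr_ge0 // mulr_ge0 // ltW.
    - apply/measurable_EFinP; apply: measurable_funD => //.
      by apply: measurable_funM => //; exact: measurable_cst.
    - apply/measurable_EFinP; apply: measurable_funD; first exact: measurable_cst.
      apply: measurable_funM; first exact: measurable_cst.
      exact: measurable_funX.
    - by move=> w _; rewrite lee_fin Gle.
  move: Hint; rewrite eqL eqR lee_fin.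
  lra.
have stepB : (P [set w | (partial_sum X k w <= x)%R] <=
    (expR (lam * x) * (eta * \sum_(j < M) q j) ^+ k)%:E)%E.
  pose c (i : nat) (j : 'I_M) (w : T) : R := (((j%:R / M%:R <= f (X i w))%R : bool)%:R).
  pose Bn (t : {ffun 'I_k -> 'I_M}) (i : nat) : set R :=
    if (insub i : option 'I_k) is Some i' then B (t i') else setT.
  have mBn t i : measurable (Bn t i).
    by rewrite /Bn; case: (insub i) => [i'|] //; exact: mB.
  have Bnv t (i : 'I_k) : Bn t i = B (t i) by rewrite /Bn valK.
  pose F (t : {ffun 'I_k -> 'I_M}) : set T :=
    \bigcap_(i in [set` iota 0 k]) (X i @^-1` Bn t i).
  have mF t : measurable (F t).
    have [ne|e] := pselect ([set` iota 0 k] !=set0).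
      by apply: bigcap_measurable => // i _; exact: mpre.
    have -> : F t = setT.
      rewrite /F (_ : [set` iota 0 k] = set0) ?bigcap_set0 //.
      by apply/seteqP; split => // i hi; apply: e; exists i.
    exact: measurableT.
  pose S := [set w | (partial_sum X k w <= x)%R].
  have mS : measurable S.
    rewrite /S -[X in measurable X]setTI.
    apply: (measurable_fun_le (g := cst x)) => //; try exact: measurable_cst.
    by rewrite /partial_sum; apply: measurable_sum => i; exact: measurable_funP.
  have c_ind (t : {ffun 'I_k -> 'I_M}) w : \prod_(i < k) c i (t i) w = \1_(F t) w.
    rewrite indicE.
    case: (boolP [forall i : 'I_k, ((t i)%:R / M%:R <= f (X i w))%R]) => h.
      rewrite big1 => [|i _]; last by rewrite /c (forallP h).
      rewrite mem_set // => i /= hi.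
      have ik : (i < k)%N by move: hi; rewrite mem_iota.
      have := Bnv t (Ordinal ik); rewrite /= => ->.
      exact: (forallP h (Ordinal ik)).
    move/forallPn: h => [i hi].
    rewrite (bigD1 i) //= /c (negbTE hi) mul0r memNset //.
    move=> hF; move/negP: hi; apply.
    have := hF i; rewrite /= Bnv; apply.
    by rewrite mem_iota /= add0n.
  have ident4 w : \prod_(i < k) (eta * \sum_(j < M) c i j w) =
      eta ^+ k * \sum_(t : {ffun 'I_k -> 'I_M}) \1_(F t) w.
    rewrite big_split /= prodr_const card_ord; congr (_ * _).
    rewrite bigA_distr_bigA /=; apply: eq_bigr => t _; exact: c_ind.
  have pw w : \1_S w <= expR (lam * x) * (eta ^+ k * \sum_(t : {ffun 'I_k -> 'I_M}) \1_(F t) w).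
    rewrite -ident4.
    have G0' : 0 <= \prod_(i < k) (eta * \sum_(j < M) c i j w).
      apply: prodr_ge0 => i _; apply: mulr_ge0 => //; apply: sumr_ge0 => j _.
      by rewrite /c ler0n.
    rewrite indicE; case: (boolP (w \in S)) => hS /=; last by rewrite mulr_ge0 ?expR_ge0.
    have hS' : partial_sum X k w <= x := set_mem hS.
    apply: (le_trans (y := expR (lam * x) * \prod_(i < k) f (X i w))).
      rewrite /f -expR_sum -expRD.
      have -> : lam * x + \sum_(i < k) - (lam * X i w) = lam * (x - partial_sum X k w).
        by rewrite /partial_sum mulrBr mulr_sumr sumrN.
      have := expR_ge1Dx (lam * (x - partial_sum X k w)).
      have : 0 <= lam * (x - partial_sum X k w) by rewrite mulr_ge0 ?subr_ge0 // ltW.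
      lra.
    rewrite ler_wpM2l ?expR_ge0 //; apply: ler_prod => i _.
    apply/andP; split; first exact: expR_ge0.
    have y1 : f (X i w) <= 1 by rewrite /f expR_le1 oppr_le0 mulr_ge0 // ltW.
    have [h _] := @count_bounds R M _ M0 (expR_ge0 _) y1.
    exact: h.
  have PF t : P (F t) = (\prod_(i < k) q (t i))%:E.
    rewrite /F (indep (iota 0 k) (Bn t) (iota_uniq 0 k) (mBn t)).
    have -> : iota 0 k = index_iota 0 k by rewrite /index_iota subn0.
    rewrite big_mkord -prodEFin; apply: eq_bigr => i _.
    rewrite Bnv.
    have hi := congr1 (fun m => m (B (t i))) (ident i).
    transitivity (P (X 0%N @^-1` B (t i))); first exact: hi.
    by rewrite /q fineK //; apply: fin_num_measure; exact: mpre.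
  have eP : P S = (\int[P]_w (\1_S w)%:E)%E by rewrite integral_indic // setIT.
  have mI (t : {ffun 'I_k -> 'I_M}) : measurable_fun setT (fun w => (\1_(F t) w : R)%:E).
    by apply/measurable_EFinP; apply: measurable_indic; exact: mF.
  have I0 (t : {ffun 'I_k -> 'I_M}) w : (0 <= (\1_(F t) w : R)%:E)%E.
    by rewrite lee_fin indicE ler0n.
  pose C0 := expR (lam * x) * eta ^+ k.
  have C00 : 0 <= C0 by rewrite mulr_ge0 ?expR_ge0 // exprn_ge0.
  rewrite eP.
  apply: (le_trans (y := (\int[P]_w (C0 * \sum_(t : {ffun 'I_k -> 'I_M}) \1_(F t) w)%:E)%E)).
    have h0 : forall w, [set: T] w -> (0 <= (\1_S w : R)%:E)%E.
      by move=> w _; rewrite lee_fin indicE ler0n.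
    have m1 : measurable_fun setT (fun w => (\1_S w : R)%:E).
      by apply/measurable_EFinP; exact: measurable_indic.
    have m2 : measurable_fun setT (fun w => (C0 * \sum_(t : {ffun 'I_k -> 'I_M}) \1_(F t) w)%:E).
      apply/measurable_EFinP; apply: measurable_funM; first exact: measurable_cst.
      by apply: measurable_sum => t; apply: measurable_indic; exact: mF.
    apply: (ge0_le_integral P measurableT h0 m1 m2).
    by move=> w _; rewrite lee_fin /C0 -mulrA; exact: pw.
  rewrite (eq_integral (fun w => (C0%:E * \sum_(t : {ffun 'I_k -> 'I_M}) (\1_(F t) w : R)%:E)%E)); last first.
    by move=> w _; rewrite EFinM sumEFin.
  rewrite ge0_integralZl //; first last.
  - by move=> w _; apply: sume_ge0 => t _; exact: I0.
  - exact: emeasurable_sum.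
  rewrite (@ge0_integral_sum _ _ _ P _ measurableT _
      (fun (t : {ffun 'I_k -> 'I_M}) w => (\1_(F t) w : R)%:E) mI (fun t w _ => I0 t w)).
  rewrite (eq_bigr (fun t : {ffun 'I_k -> 'I_M} => (\prod_(i < k) q (t i))%:E)); last first.
    by move=> t _; rewrite integral_indic // setIT; exact: PF.
  have e8 : \prod_(i < k) (\sum_(j < M) q j) = \sum_(t : {ffun 'I_k -> 'I_M}) \prod_(i < k) q (t i).
    by rewrite bigA_distr_bigA.
  rewrite sumEFin -e8 prodr_const card_ord -EFinM lee_fin /C0 exprMn mulrA.
  by [].
apply: le_trans stepB _; rewrite lee_fin ler_wpM2l ?expR_ge0 //.
apply: lerXn2r; rewrite ?nnegrE ?expR_ge0 ?mulr_ge0 ?sumr_ge0 //.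
apply: le_trans stepA _.
have := expR_ge1Dx (- (lam * mu) + lam ^+ 2 * (s2 + 1)); lra.
Qed.
Lemma psum_mono d (T : measurableType d) (R : realType) (P : probability T R)
  (X : nat -> {RV P >-> R}) (w : T) (a b : nat) :
  (forall n, 0 <= X n w) -> (a <= b)%N -> partial_sum X a w <= partial_sum X b w.
Proof.
move=> X0 ab; rewrite /partial_sum -!(big_mkord xpredT (fun n => X n w)).
rewrite (@big_cat_nat _ _ _ a 0 b _ _ (leq0n a) ab) /= lerDl.
by apply: sumr_ge0 => i _.
Qed.

Lemma event_eq d (T : measurableType d) (R : realType) (P : probability T R)
  (X : nat -> {RV P >-> R}) (x m u : R) :
  (forall n w, 0 <= X n w) -> 0 <= m + u ->
  [set w | (renewal_count X x w - m%:E > u%:E)%E] =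
  [set w | partial_sum X (Num.truncn (m + u)).+1 w <= x].
Proof.
move=> X0 mu0; have /andP[t1 t2] := truncn_itv mu0.
apply/seteqP; split => w /=.
- move=> h.
  have hN : ((m + u)%:E < renewal_count X x w)%E.
    move: h; case: (renewal_count X x w) => [r| |] //=.
    by rewrite !lte_fin; lra.
    by move=> _; exact: ltry.
  have [y [j /= hj <-] hy] := ereal_sup_gt hN.
  apply: le_trans hj; apply: psum_mono => //.
  by rewrite truncn_lt_nat // -lte_fin.
- move=> h.
  have hN : (((Num.truncn (m + u)).+1)%:R%:E <= renewal_count X x w)%E.
    apply: ereal_sup_ubound; exists (Num.truncn (m + u)).+1 => //.
  move: hN; case: (renewal_count X x w) => [r| |] //=.
  rewrite !lte_fin lee_fin; lra.
by move=> _; rewrite addye // ltry.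
Qed.

Lemma meas_S d (T : measurableType d) (R : realType) (P : probability T R)
  (X : nat -> {RV P >-> R}) (k : nat) (x : R) :
  measurable [set w | partial_sum X k w <= x].
Proof.
rewrite -[X in measurable X]setTI.
apply: (measurable_fun_le (g := cst x)) => //; try exact: measurable_cst.
by rewrite /partial_sum; apply: measurable_sum => i; exact: measurable_funP.
Qed.

Lemma ler_frac (R : realType) (a b c e : R) : 0 < b -> 0 < e -> a * e <= c * b -> a / b <= c / e.
Proof.
move=> b0 e0 h; rewrite ler_pdivrMr // mulrAC ler_pdivlMr //.
Qed.

Theorem lemmaA9 (d : measure_display) (T : measurableType d) (R : realType)
  (P : probability T R) (X : nat -> {RV P >-> R}) :
  mutually_independent X ->
  identically_distributed X ->
  (forall n w, 0 <= X n w) ->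
  ('E_P[X 0%N] > 0)%E ->
  ('E_P[(fun w => (X 0%N w ^+ 2)%R)] < +oo)%E ->
  forall delta : R, 0 < delta ->
  exists C c : R, 0 < C /\ 0 < c /\
    forall x u : R, 0 <= x -> 0 <= u -> u <= delta * x ->
      (P [set w | (renewal_count X x w - (x / fine 'E_P[X 0%N])%:E > u%:E)%E]
        <= (C * expR (- (c * u ^+ 2 / x)))%:E)%E.
Proof.
move=> indep ident X0 Epos E2 delta d0.
have mX : measurable_fun setT (X 0%N) by exact: measurable_funP.
have E2ge : (0 <= 'E_P[(fun w => (X 0%N w ^+ 2)%R)])%E.
  by rewrite unlock; apply: integral_ge0 => w _; rewrite lee_fin sqr_ge0.
pose s2 := fine 'E_P[(fun w => (X 0%N w ^+ 2)%R)].
have Es2 : ('E_P[(fun w => (X 0%N w ^+ 2)%R)] = s2%:E)%E.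
  by rewrite fineK // ge0_fin_numE.
have s20 : 0 <= s2 by apply: fine_ge0.
have E1ge : (0 <= 'E_P[X 0%N])%E by exact: ltW.
have E1le : ('E_P[X 0%N] <= (1 + s2)%:E)%E.
  rewrite unlock.
  apply: (le_trans (y := (\int[P]_w ((1%:E + (X 0%N w ^+ 2)%:E)))%E)).
    have h0 : forall w, [set: T] w -> (0 <= (X 0%N w)%:E)%E.
      by move=> w _; rewrite lee_fin.
    have m1 : measurable_fun setT (fun w => (X 0%N w)%:E) by exact/measurable_EFinP.
    have m2 : measurable_fun setT (fun w => (1%:E + (X 0%N w ^+ 2)%:E)%E).
      rewrite (_ : (fun w => _) = (fun w => (1 + X 0%N w ^+ 2)%:E)); last first.
        by apply: funext => w; rewrite EFinD.
      apply/measurable_EFinP; apply: measurable_funD; first exact: measurable_cst.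
      exact: measurable_funX.
    apply: (ge0_le_integral P measurableT h0 m1 m2).
    move=> w _; rewrite -EFinD lee_fin.
    by have := X0 0%N w; nra.
  have h1 : forall w, [set: T] w -> (0 <= (1%:E : \bar R))%E by move=> w _; rewrite lee_fin.
  have h2 : forall w, [set: T] w -> (0 <= (X 0%N w ^+ 2)%:E)%E.
    by move=> w _; rewrite lee_fin sqr_ge0.
  have m3 : measurable_fun setT (fun w => (X 0%N w ^+ 2)%:E).
    by apply/measurable_EFinP; exact: measurable_funX.
  rewrite (ge0_integralD P measurableT h1 (measurable_cst _) h2 m3).
  rewrite integral_cst //.
  set PT := (X in (_ * X + _)%E); have -> : PT = 1%E by exact: probability_setT.
  have EX2 : (\int[P]_w ((X 0%N w) ^+ 2)%:E = s2%:E)%E by rewrite -Es2 unlock.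
  by rewrite mule1 EX2 -EFinD.
pose mu := fine 'E_P[X 0%N].
have Emu : ('E_P[X 0%N] = mu%:E)%E.
  rewrite fineK // ge0_fin_numE //; apply: le_lt_trans E1le _; exact: ltry.
have mu0 : 0 < mu by rewrite -lte_fin -Emu.
pose s := s2 + 1.
have s0 : 0 < s by rewrite /s; lra.
pose K := mu^-1 + delta + 1.
have K0 : 0 < K by rewrite /K; have := invr_gt0 mu; rewrite mu0 => /idP ?; lra.
pose c := mu ^+ 2 / (4 * s * K).
have c0 : 0 < c by rewrite /c divr_gt0 ?exprn_gt0 // !mulr_gt0.
pose C := expR (c * delta ^+ 2).
exists C, c; split; first exact: expR_gt0.
split => // x u x0 u0 ux.
rewrite -/mu.
have mu0' : 0 <= x / mu + u by rewrite addr_ge0 // divr_ge0 // ltW.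
rewrite (@event_eq _ _ _ P X x (x / mu) u X0 mu0').
set Kn := (Num.truncn (x / mu + u)).+1.
have mS := @meas_S _ _ _ P X Kn x.
have Cge z : 0 <= z -> z <= c * delta ^+ 2 -> 1 <= C * expR (- z).
  move=> z0 zc; rewrite /C -expRD.
  have := expR_ge1Dx (c * delta ^+ 2 + - z); lra.
have Ple1 := probability_le1 P mS.
set Bv := c * u ^+ 2 / x.
have Bv0 : 0 <= Bv by rewrite /Bv divr_ge0 // mulr_ge0 ?sqr_ge0 // ltW.
case: (ltrP x 1) => hx.
  have hB : Bv <= c * delta ^+ 2.
    case: (eqVneq x 0) => [x00|xn0].
      by rewrite /Bv x00 invr0 mulr0 mulr_ge0 ?sqr_ge0 // ltW.
    have xp : 0 < x by rewrite lt0r xn0 x0.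
    rewrite /Bv ler_pdivrMr //.
    have h1 : 0 <= delta * x - u by lra.
    have h2 : 0 <= delta ^+ 2 * x * (1 - x).
      by rewrite mulr_ge0 ?mulr_ge0 ?sqr_ge0 // ?subr_ge0 ?ltW.
    have hu : u ^+ 2 <= delta ^+ 2 * x by nra.
    have hu' : 0 <= delta ^+ 2 * x - u ^+ 2 by rewrite subr_ge0.
    have := mulr_ge0 (ltW c0) hu'; lra.
  apply: le_trans Ple1 _; rewrite lee_fin; exact: Cge.
case: (eqVneq u 0) => [u00|un0].
  have -> : Bv = 0 by rewrite /Bv u00 expr0n mulr0 mul0r.
  apply: le_trans Ple1 _; rewrite lee_fin; apply: Cge => //.
  by rewrite mulr_ge0 ?sqr_ge0 // ltW.
have up : 0 < u by rewrite lt0r un0 u0.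
have xp : 0 < x by lra.
have /andP[tr1 tr2] := truncn_itv mu0'.
rewrite -/Kn in tr2.
pose t := Kn%:R * mu - x.
have xmu : x / mu * mu = x by rewrite divfK // gt_eqF.
have t_ge : u * mu <= t.
  rewrite /t; have := ler_wpM2r (ltW mu0) (ltW tr2); rewrite mulrDl xmu; lra.
have Kn_le : Kn%:R <= K * x.
  rewrite /K /Kn -natr1 !mulrDl mul1r [mu^-1 * x]mulrC.
  have : delta * x >= u by lra.
  lra.
have Knp : 0 < (Kn%:R : R) by rewrite ltr0n.
pose lam := t / (2 * Kn%:R * s).
have tp : 0 < t.
  have : 0 < u * mu by rewrite mulr_gt0.
  lra.
have lam0 : 0 < lam by rewrite /lam divr_gt0 // !mulr_gt0.
have ch := @chernoff d T R P X mu s2 lam x Kn indep ident X0 Emu Es2 lam0.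
apply: le_trans ch _; rewrite lee_fin.
rewrite -expRM_natl -expRD.
have -> : lam * x + Kn%:R * (- (lam * mu) + lam ^+ 2 * (s2 + 1)) =
    - (t ^+ 2 / (4 * Kn%:R * s)).
  rewrite /lam /t /s; field.
  have s0' : (0:R) < s2 + 1 by rewrite -/s.
  by rewrite (gt_eqF s0') (gt_eqF Knp).
have -> : C * expR (- Bv) = expR (c * delta ^+ 2 + - Bv) by rewrite /C expRD.
rewrite ler_expR.
have hB : Bv <= t ^+ 2 / (4 * Kn%:R * s).
  have -> : Bv = (mu ^+ 2 * u ^+ 2) / (4 * s * K * x).
    rewrite /Bv /c; field.
    have s1 : 0 < s by rewrite /s; lra.
    by rewrite (gt_eqF xp) (gt_eqF K0) (gt_eqF s1).
  apply: ler_frac; first by rewrite !mulr_gt0.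
    by rewrite !mulr_gt0.
  have A0 : 0 <= mu ^+ 2 * u ^+ 2 by rewrite mulr_ge0 ?sqr_ge0.
  have h1 : mu ^+ 2 * u ^+ 2 <= t ^+ 2.
    rewrite -exprMn mulrC lerXn2r // nnegrE ?mulr_ge0 ?ltW //.
  have h3 := ler_wpM2l (mulr_ge0 A0 (ltW (mulr_gt0 (ltr0n _ 4) s0))) Kn_le.
  have h4 := ler_wpM2r (ltW (mulr_gt0 (mulr_gt0 (mulr_gt0 (ltr0n R 4) s0) K0) xp)) h1.
  nra.
have : 0 <= c * delta ^+ 2 by rewrite mulr_ge0 ?sqr_ge0 // ltW.
lra.
Qed.
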